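(* For every integer $n\geq 1$, $$2^n(1+x^2)\widehat{A}_n(x)=(1-x)^{n+1}P_n\!\left(\frac{1+x}{1-x}\right).$$
   Context: For a permutation $\pi=\pi(1)\pi(2)\cdots\pi(n)$ of $[n]=\{1,\ldots,n\}$, the number of alternating descents is ${\rm altdes}(\pi)=|\{2i: \pi(2i)<\pi(2i+1)\}\cup\{2i+1:\pi(2i+1)>\pi(2i+2)\}|$, where only indices $j\in\{1,\ldots,n-1\}$ are considered (so that $\pi(j+1)$ is defined). The alternating Eulerian polynomial is $\widehat{A}_n(x)=\sum_{\pi\in\mathfrak{S}_n}x^{{\rm altdes}(\pi)}$, where $\mathfrak{S}_n$ is the symmetric group on $[n]$. The derivative polynomials $P_n(x)$ (Hoffman) are defined by $P_n(\tan\theta)=\frac{d^n}{d\theta^n}\tan\theta$; equivalently $P_0(x)=x$ and $P_{n+1}(x)=(1+x^2)P_n'(x)$. *)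

(* Defs.v *)
From HB Require Import structures.
From mathcomp Require Import all_boot all_order all_algebra all_fingroup.
Set Implicit Arguments. Unset Strict Implicit. Unset Printing Implicit Defensive.
Import GRing.Theory Num.Theory.

(* Value pi(k+1) (1-based) of a permutation s : 'S_n at 0-based position k,
   0 if k is out of range (never used out of range below). *)
Definition pval (n : nat) (s : 'S_n) (k : nat) : nat :=
  match (insub k : option 'I_n) with
  | Some i => nat_of_ord (s i)
  | None => 0%N
  end.

(* Alternating descents.  A 0-based position k (0 <= k <= n-2) corresponds to
   the paper's index j = k+1.  j even (k odd): counted iff pi(j) < pi(j+1);
   j odd (k even): counted iff pi(j) > pi(j+1). *)
Definition altdes (n : nat) (s : 'S_n) : nat :=
  count (fun k => if odd k then (pval s k < pval s k.+1)%N
                  else (pval s k.+1 < pval s k)%N) (iota 0 n.-1).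

Definition altEuler (R : nzRingType) (n : nat) : {poly R} :=
  (\sum_(s : 'S_n) 'X^(altdes s))%R.

Fixpoint derivP (R : nzRingType) (n : nat) : {poly R} :=
  match n with
  | 0 => 'X
  | m.+1 => ((1 + 'X^2) * (derivP R m)^`())%R
  end.

(* Main.v *)
Require Import Defs.
From mathcomp Require Import all_boot all_order all_algebra all_fingroup zify ring.
Import GRing.Theory Num.Theory.
Set Implicit Arguments. Unset Strict Implicit. Unset Printing Implicit Defensive.

Definition rule (f : bool) (a c : nat) : bool := if f then (a < c)%N else (c < a)%N.

Fixpoint altp (f : bool) (s : seq nat) : nat :=
  match s with
  | a :: t => if t is c :: _ then rule f a c + altp (~~ f) t else 0
  | [::] => 0
  end.

Lemma altp_cons f a t :
  altp f (a :: t) = ((if t is c :: _ then rule f a c else false) + altp (~~ f) t)%N.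
Proof. by case: t. Qed.

Lemma altp_cons2 f a b t : altp f (a :: b :: t) = (rule f a b + altp (~~ f) (b :: t))%N.
Proof. by []. Qed.

Lemma altp_cat f a u M w :
  altp f (a :: u ++ M :: w) =
  (altp f (a :: u) + rule (f (+) odd (size u)) (last a u) M
   + altp (f (+) ~~ odd (size u)) (M :: w))%N.
Proof.
elim: u f a => [|b u IH] f a.
  by rewrite /= addbF addbT.
rewrite cat_cons !altp_cons2 IH !addnA; congr (_ + _ + _)%N.
  by rewrite /= addNb addbN.
by rewrite /=; case: f; case: (odd _).
Qed.

Lemma altp_iota g j m :
  altp (odd j) (map g (iota j m)) =
  count (fun k => rule (odd k) (g k) (g k.+1)) (iota j m.-1).
Proof.
elim: m j => [|m IH] j //.
case: m IH => [|m] IH //=.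
by rewrite -IH /= negbK.
Qed.

Lemma altp_map_mono f s g :
  {in s &, forall a c, (a < c)%N = (g a < g c)%N} -> altp f (map g s) = altp f s.
Proof.
elim: s f => [|a s IH] f H //.
case: s IH H => [|c s] IH H //.
rewrite [map _ _]/= !altp_cons2 -[_ :: map g s]/(map g (c :: s)) IH;
  last by move=> x y xi yi; apply: H; rewrite inE ?xi ?yi orbT.
by rewrite /rule -!H ?inE ?eqxx ?orbT.
Qed.

Lemma altp_map_anti f s g : uniq s ->
  {in s &, forall a c, (a < c)%N -> (g c < g a)%N} -> altp f (map g s) = altp (~~ f) s.
Proof.
elim: s f => [|a s IH] f // /andP[an us] H.
case: s IH H an us => [|c s] IH H an us //.
rewrite [map _ _]/= !altp_cons2 -[_ :: map g s]/(map g (c :: s)) (IH (~~ f) us);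
  last by move=> x y xi yi; apply: H; rewrite inE ?xi ?yi orbT.
congr (_ + _)%N.
have ac : a != c by move: an; rewrite inE negb_or => /andP[].
have Ha : a \in a :: c :: s by rewrite inE eqxx.
have Hc : c \in a :: c :: s by rewrite !inE eqxx orbT.
rewrite /rule; case: f => /=.
- case: (ltngtP a c) => [lt|lt|eq].
  + by rewrite ltnNge ltnW // (H _ _ Ha Hc lt).
  + by rewrite (H _ _ Hc Ha lt).
  + by rewrite eq eqxx in ac.
- case: (ltngtP a c) => [lt|lt|eq].
  + by rewrite (H _ _ Ha Hc lt).
  + by rewrite ltnNge ltnW // (H _ _ Hc Ha lt).
  + by rewrite eq eqxx in ac.
Qed.

Definition Pn n := permutations (iota 0 n).
Definition Lp n (s : 'S_n) := map (Defs.pval s) (iota 0 n).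

Lemma altdesE n (s : 'S_n) : altdes s = altp false (Lp s).
Proof.
by rewrite /altdes /Lp (altp_iota (Defs.pval s) 0 n).
Qed.

Lemma Lp_enum n (s : 'S_n) : Lp s = map (fun i : 'I_n => val (s i)) (enum 'I_n).
Proof.
rewrite /Lp -val_enum_ord -map_comp; apply: eq_map => i /=.
by rewrite /Defs.pval valK.
Qed.

Lemma Lp_perm n (s : 'S_n) : perm_eq (Lp s) (iota 0 n).
Proof.
rewrite Lp_enum -val_enum_ord (map_comp val s); apply: perm_map.
apply: uniq_perm; first by rewrite (map_inj_uniq (@perm_inj _ s)) enum_uniq.
  exact: enum_uniq.
move=> x; rewrite mem_enum; apply/mapP; exists (s^-1 x)%g; rewrite ?mem_enum //.
by rewrite permKV.
Qed.

Lemma Lp_inj n : injective (@Lp n).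
Proof.
move=> s t; rewrite !Lp_enum => /eq_in_map H; apply/permP => i.
by apply: val_inj; apply: H; rewrite mem_enum.
Qed.

Lemma Pn_uniq n : uniq (Pn n).
Proof. exact: permutations_uniq. Qed.

Lemma size_Pn n : size (Pn n) = n`!.
Proof. by rewrite size_permutations ?iota_uniq // size_iota. Qed.

Lemma mem_Pn n t : (t \in Pn n) = perm_eq t (iota 0 n).
Proof. exact: mem_permutations. Qed.

Lemma perm_eq_uniq_sub (T : eqType) (s1 s2 : seq T) : uniq s1 -> uniq s2 ->
  {subset s1 <= s2} -> size s2 <= size s1 -> perm_eq s1 s2.
Proof.
move=> u1 u2 sub sz; apply: uniq_perm => //.
by have [_] := uniq_min_size u1 sub sz.
Qed.

Lemma size_ie (T : finType) : size (index_enum T) = #|T|.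
Proof. by rewrite cardE /enum_mem size_filter count_predT. Qed.

Lemma sum_Sn (V : nmodType) n (F : seq nat -> V) :
  (\sum_(s : 'S_n) F (Lp s) = \sum_(t <- Pn n) F t)%R.
Proof.
rewrite -(big_map (@Lp n) xpredT F); apply: perm_big.
apply: perm_eq_uniq_sub; last first.
- by rewrite size_map size_ie card_Sn size_Pn.
- by move=> t /mapP[s _ ->]; rewrite mem_Pn Lp_perm.
- exact: Pn_uniq.
- by rewrite (map_inj_uniq (@Lp_inj n)) index_enum_uniq.
Qed.

Definition ins (M i : nat) (s : seq nat) := take i s ++ M :: drop i s.

Lemma ins_perm M i s : perm_eq (ins M i s) (M :: s).
Proof.
rewrite /ins -[M :: drop i s]/([:: M] ++ drop i s) perm_catCA /=.
by rewrite cat_take_drop.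
Qed.

Lemma ins_inj M i j s t : M \notin s -> M \notin t -> i <= size s -> j <= size t ->
  ins M i s = ins M j t -> i = j /\ s = t.
Proof.
move=> Ms Mt Hi Hj E.
have idx : forall k u, M \notin u -> k <= size u -> index M (ins M k u) = k.
  move=> k u Mu ku; rewrite /ins index_cat ifF; last first.
    by apply/negbTE; apply: contra Mu; apply: mem_take.
  by rewrite /= eqxx addn0 size_takel.
have ij : i = j by rewrite -(idx i s) // E idx.
split => //; subst j.
move: E; rewrite /ins => /eqP; rewrite eqseq_cat ?size_takel // => /andP[/eqP E1 /eqP[E2]].
by rewrite -(cat_take_drop i s) -(cat_take_drop i t) E1 E2.
Qed.

Lemma iotaS0 n : iota 0 n.+1 = iota 0 n ++ [:: n].
Proof. by rewrite -addn1 iotaD. Qed.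

Lemma mem_allpairs_pair (S T : eqType) (s : seq S) (t : seq T) x y :
  ((x, y) \in [seq (a, b) | a <- s, b <- t]) = (x \in s) && (y \in t).
Proof.
apply/allpairsP/andP => [[[a b] /= [H1 H2 [-> ->]]] // | [H1 H2]].
by exists (x, y).
Qed.

Lemma Pn_max n : perm_eq [seq ins n i s | s <- Pn n, i <- iota 0 n.+1] (Pn n.+1).
Proof.
apply: perm_eq_uniq_sub; last first.
- by rewrite size_allpairs !size_Pn size_iota factS mulnC.
- move=> t /allpairsP[[s i] /= [sP iP ->]]; rewrite mem_Pn.
  apply: (perm_trans (ins_perm _ _ _)); rewrite iotaS0 perm_sym perm_catC /=.
  by rewrite perm_cons perm_sym -mem_Pn.
- exact: Pn_uniq.
- apply: allpairs_uniq; [exact: Pn_uniq| exact: iota_uniq|].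
  move=> [s i] [t j]; rewrite !mem_allpairs_pair => /andP[sP iP] /andP[tP jP] /= E.
  move: sP tP iP jP; rewrite !mem_Pn !mem_iota /= !add0n !ltnS => sP tP iP jP.
  have [||||-> ->] // := @ins_inj n i j s t _ _ _ _ E.
  + by rewrite (perm_mem sP) mem_iota ltnn.
  + by rewrite (perm_mem tP) mem_iota ltnn.
  + by rewrite (perm_size sP) size_iota.
  + by rewrite (perm_size tP) size_iota.
Qed.

Lemma Pn_min n :
  perm_eq [seq ins 0 i (map succn s) | s <- Pn n, i <- iota 0 n.+1] (Pn n.+1).
Proof.
apply: perm_eq_uniq_sub; last first.
- by rewrite size_allpairs !size_Pn size_iota factS mulnC.
- move=> t /allpairsP[[s i] /= [sP iP ->]]; rewrite mem_Pn.
  apply: (perm_trans (ins_perm _ _ _)); rewrite /= perm_cons.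
  rewrite -add1n iotaDl -[map succn s]/(map (addn 1) s); apply: perm_map.
  by rewrite -mem_Pn.
- exact: Pn_uniq.
- apply: allpairs_uniq; [exact: Pn_uniq| exact: iota_uniq|].
  move=> [s i] [t j]; rewrite !mem_allpairs_pair => /andP[sP iP] /andP[tP jP] /= E.
  move: sP tP iP jP; rewrite !mem_Pn !mem_iota /= !add0n !ltnS => sP tP iP jP.
  have [||||-> E2] // := @ins_inj 0 i j (map succn s) (map succn t) _ _ _ _ E.
  + by apply/mapP => -[].
  + by apply/mapP => -[].
  + by rewrite size_map (perm_size sP) size_iota.
  + by rewrite size_map (perm_size tP) size_iota.
  + by congr (_, _); apply: (inj_map succn_inj).
Qed.

Lemma arith4 (a b c d : nat) : (a + b + c + (c + d) = c + c + (a + b) + d)%N.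
Proof. lia. Qed.

Lemma alt_ins (h : bool) M s i : i <= size s ->
  {in s, forall v, (v < M) = h /\ (M < v) = ~~ h} ->
  altp false (ins M i s) =
  ((0 < i) && (odd i != h)) + ((i < size s) && (odd i != h))
  + altp false (take i s) + altp (~~ odd i) (drop i s).
Proof.
move=> Hi Hs.
have rl : forall g v, v \in s -> rule g v M = (g == h).
  by move=> g v vs; have [H1 H2] := Hs v vs; rewrite /rule H1 H2; case: g; case: (h).
have rr : forall g v, v \in s -> rule g M v = (g != h).
  by move=> g v vs; have [H1 H2] := Hs v vs; rewrite /rule H1 H2; case: g; case: (h).
case: i Hi => [|j] js.
  rewrite /ins take0 drop0 cat0s altp_cons.
  case: s Hs rl rr {js} => [|c s] Hs rl rr //=.
  have := rr false c (mem_head _ _); rewrite /rule => ->.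
  by rewrite add0n addn0; case: (h).
case: s Hs rl rr js => [|a s] Hs rl rr // js.
rewrite /ins [take _ _]/= [drop _ _]/= cat_cons altp_cat size_takel // altp_cons.
rewrite rl; last by have := mem_last a (take j s); rewrite !inE => /orP[->|/mem_take->]; rewrite ?orbT.
have e1 : (odd j.+1 != h) = (odd j == h) by rewrite /=; case: (odd j); case: (h).
have e2 : (odd j.+1 != h) = (~~ odd j != h) by [].
rewrite -[size (a :: s)]/((size s).+1) !ltnS leq0n andTb.
rewrite -[~~ odd j.+1]/(~~ ~~ odd j) negbK -[false (+) odd j]/(odd j).
rewrite -[false (+) ~~ odd j]/(~~ odd j).
case Ed: (drop j s) => [|c w].
  have : size (drop j s) = 0 by rewrite Ed.
  rewrite size_drop => /eqP; rewrite subn_eq0 => sj.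
  rewrite ltnNge sj andFb -[altp _ [:: M]]/0 -[altp _ [::]]/0 e1; lia.
rewrite altp_cons2 rr; last by rewrite inE -(cat_take_drop j s) mem_cat Ed inE eqxx !orbT.
have -> : (j < size s) = true.
  by rewrite -subn_gt0 -size_drop Ed.
rewrite negbK e1 andTb; apply: arith4.
Qed.

Definition cmpl (q : seq nat) (v : nat) : nat :=
  let s := sort leq q in nth 0 s ((size s).-1 - index v s).

Lemma cmpl_facts q : uniq q ->
  [/\ uniq (sort leq q), sort leq q =i q, size (sort leq q) = size q
     & sorted ltn (sort leq q)].
Proof.
move=> uq; have us : uniq (sort leq q) by rewrite sort_uniq.
split => //; [exact: mem_sort | exact: size_sort |].
by rewrite ltn_sorted_uniq_leq us sort_sorted //; exact: leq_total.
Qed.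

Lemma cmpl_idx q v : uniq q -> v \in q ->
  (index v (sort leq q) < size (sort leq q)) /\
  index (cmpl q v) (sort leq q) = (size (sort leq q)).-1 - index v (sort leq q).
Proof.
move=> uq vq; have [us ms ss sl] := cmpl_facts uq.
have vs : v \in sort leq q by rewrite ms.
have iv : index v (sort leq q) < size (sort leq q) by rewrite index_mem.
split => //; rewrite /cmpl index_uniq //.
move: (index v _) (size _) iv => a b H; lia.
Qed.

Lemma cmpl_mem q v : uniq q -> v \in q -> cmpl q v \in q.
Proof.
move=> uq vq; have [us ms ss sl] := cmpl_facts uq; have [iv _] := cmpl_idx uq vq.
rewrite -ms /cmpl mem_nth //; move: (index v _) (size _) iv => a b H; lia.
Qed.

Lemma cmpl_invol q v : uniq q -> v \in q -> cmpl q (cmpl q v) = v.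
Proof.
move=> uq vq; have [us ms ss sl] := cmpl_facts uq; have [iv E] := cmpl_idx uq vq.
rewrite {1}/cmpl E.
have -> : forall a b, a < b -> b.-1 - (b.-1 - a) = a by move=> a b H; lia.
  by rewrite nth_index // ms.
by [].
Qed.

Lemma cmpl_anti q v w : uniq q -> v \in q -> w \in q -> v < w -> cmpl q w < cmpl q v.
Proof.
move=> uq vq wq vw; have [us ms ss sl] := cmpl_facts uq.
have [iv _] := cmpl_idx uq vq; have [iw _] := cmpl_idx uq wq.
have ivw : index v (sort leq q) < index w (sort leq q).
  case: (ltngtP (index v (sort leq q)) (index w (sort leq q))) => // H.
  - have := sorted_ltn_index ltn_trans sl; move=> /(_ w v).
    by rewrite !ms => /(_ wq vq H); rewrite ltnNge ltnW.
  - have : v = w by rewrite -(nth_index 0 (_ : v \in sort leq q)) ?ms // H nth_index ?ms.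
    by move=> E; rewrite E ltnn in vw.
rewrite /cmpl; apply: (sorted_ltn_nth ltn_trans) => //; rewrite ?inE;
  move: (index v _) (index w _) (size _) iv iw ivw => a b c H1 H2 H3; lia.
Qed.

Lemma cmpl_perm q : uniq q -> perm_eq (map (cmpl q) q) q.
Proof.
move=> uq; apply: perm_eq_uniq_sub => //.
- rewrite (map_inj_in_uniq _) // => v w vq wq E.
  by rewrite -(cmpl_invol uq vq) E cmpl_invol.
- by move=> x /mapP[v vq ->]; apply: cmpl_mem.
- by rewrite size_map.
Qed.

Lemma cmpl_eq q q' : perm_eq q q' -> cmpl q = cmpl q'.
Proof.
move=> pq; rewrite /cmpl; have -> // : sort leq q = sort leq q'.
apply/(perm_sortP leq_total leq_trans anti_leq) => //.
Qed.

Definition phi (i : nat) (t : seq nat) := take i t ++ map (cmpl (drop i t)) (drop i t).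

Lemma take_phi i t : i <= size t -> take i (phi i t) = take i t.
Proof. by move=> it; rewrite /phi take_size_cat // size_takel. Qed.

Lemma drop_phi i t : i <= size t -> drop i (phi i t) = map (cmpl (drop i t)) (drop i t).
Proof. by move=> it; rewrite /phi drop_size_cat // size_takel. Qed.

Lemma phi_perm i t : uniq t -> perm_eq (phi i t) t.
Proof.
move=> ut; rewrite /phi -[X in perm_eq _ X](cat_take_drop i t) perm_cat2l cmpl_perm //.
by rewrite drop_uniq.
Qed.

Lemma phi_invol i t : uniq t -> i <= size t -> phi i (phi i t) = t.
Proof.
move=> ut it; have ud : uniq (drop i t) by rewrite drop_uniq.
rewrite {1}/phi take_phi // drop_phi //.
rewrite (cmpl_eq (cmpl_perm ud)) -map_comp.
rewrite -[RHS](cat_take_drop i t); congr (_ ++ _).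
rewrite -[RHS](map_id (drop i t)); apply/eq_in_map => v vq /=.
by rewrite cmpl_invol.
Qed.

Lemma Pn_uniq_elt n t : t \in Pn n -> uniq t.
Proof. by rewrite mem_Pn => /perm_uniq ->; rewrite iota_uniq. Qed.

Lemma Pn_size n t : t \in Pn n -> size t = n.
Proof. by rewrite mem_Pn => /perm_size ->; rewrite size_iota. Qed.

Lemma sum_phi (V : nmodType) n i (F : seq nat -> V) : i <= n ->
  (\sum_(t <- Pn n) F (phi i t) = \sum_(t <- Pn n) F t)%R.
Proof.
move=> iN; rewrite -(big_map (phi i) xpredT F); apply: perm_big.
apply: perm_eq_uniq_sub; last first.
- by rewrite size_map.
- move=> x /mapP[t tP ->]; rewrite mem_Pn.
  by apply: perm_trans (phi_perm _ (Pn_uniq_elt tP)) _; rewrite -mem_Pn.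
- exact: Pn_uniq.
- rewrite (map_inj_in_uniq _) ?Pn_uniq // => t u tP uP E.
  rewrite -(phi_invol (i:=i) (Pn_uniq_elt tP)) ?(Pn_size tP) // E.
  by rewrite phi_invol ?(Pn_uniq_elt uP) ?(Pn_size uP).
Qed.

Lemma flip_sum (V : nmodType) n i (F : nat -> nat -> V) : i <= n ->
  (\sum_(t <- Pn n) F (altp false (take i t)) (altp (~~ odd i) (drop i t))
  = \sum_(t <- Pn n) F (altp false (take i t)) (altp (odd i) (drop i t)))%R.
Proof.
move=> iN; rewrite -(sum_phi _ iN); apply: eq_big_seq => t tP.
have ut := Pn_uniq_elt tP; have ud : uniq (drop i t) by rewrite drop_uniq.
rewrite take_phi ?drop_phi ?(Pn_size tP) // altp_map_anti ?negbK //.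
by move=> v w vq wq; apply: cmpl_anti.
Qed.

Definition ee (h : bool) (n i : nat) : nat :=
  ((0 < i) && (odd i != h)) + ((i < n) && (odd i != h)).

Definition bb (f : bool) (i : nat) (t : seq nat) : nat :=
  (altp false (take i t) + altp (if f then odd i else ~~ odd i) (drop i t))%N.

Definition chi (t : seq nat) (k : nat) : bool :=
  rule (odd k) (nth 0 t k) (nth 0 t k.+1).

Lemma alt_count t : altp false t = count (chi t) (iota 0 (size t).-1).
Proof.
by rewrite -{1}(mkseq_nth 0 t) /mkseq (altp_iota (nth 0 t) 0 (size t)).
Qed.

Lemma alt_split t j : (j.+1 < size t)%N ->
  altp false t = (bb true j.+1 t + chi t j)%N.
Proof.
move=> jt; rewrite /bb /=.
have E1 : take j.+1 t = map (nth 0 t) (iota 0 j.+1).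
  by rewrite -{1}(mkseq_nth 0 t) /mkseq -map_take take_iota (minn_idPl _) // ltnW.
have E2 : drop j.+1 t = map (nth 0 t) (iota j.+1 (size t - j.+1)).
  by rewrite -{1}(mkseq_nth 0 t) /mkseq -map_drop drop_iota.
rewrite E1 E2 (altp_iota (nth 0 t) 0 j.+1) -[~~ odd j]/(odd j.+1).
rewrite (altp_iota (nth 0 t) j.+1) alt_count /=.
have -> : (size t).-1 = (j + (1 + ((size t - j.+1).-1)))%N by lia.
rewrite iotaD iotaD count_cat count_cat /= add0n addn0.
rewrite /chi addn1; lia.
Qed.

Open Scope ring_scope.

Definition Asum (R : comNzRingType) n : {poly R} := \sum_(t <- Pn n) 'X^(altp false t).

Lemma altEulerE (R : comNzRingType) n : altEuler R n = Asum R n.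
Proof.
rewrite /altEuler /Asum; under eq_bigr do rewrite altdesE.
exact: (sum_Sn _ (fun t => (GRing.exp (polyX R) (altp false t)))). 
Qed.

Lemma sum_if (R : comNzRingType) (r : seq nat) (P : pred nat) (A B : {poly R}) :
  \sum_(j <- r) (if P j then A else B) = A *+ count P r + B *+ count (predC P) r.
Proof.
elim: r => [|j r IH]; first by rewrite big_nil !mulr0n addr0.
rewrite big_cons IH /=; case: (P j) => /=; rewrite ?add0n ?add1n ?mulrS; ring.
Qed.

Lemma deriv_helper (R : comNzRingType) (a k : nat) :
  'X^(a.-1) *+ a + 'X^a *+ k = (1 - 'X) * ('X^a)^`() + 'X^a *+ (k + a) :> {poly R}.
Proof.
rewrite derivXn; case: a => [|a] /=; first by rewrite !mulr0n addn0; ring.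
rewrite exprS addnS mulrS mulrSr; ring.
Qed.

Lemma per_sigma (R : comNzRingType) m t : t \in Pn m.+1 ->
  \sum_(i <- iota 0 m.+2) ('X^(ee true m.+1 i) + 'X^(ee false m.+1 i)) * 'X^(bb true i t)
  = ((1 + 'X) * 'X^(altp false t)) *+ 2
    + (1 + 'X^2) * ((1 - 'X) * ('X^(altp false t))^`() + 'X^(altp false t) *+ m)
  :> {poly R}.
Proof.
move=> tP; have st := Pn_size tP; set a := altp false t.
have -> : iota 0 m.+2 = 0%N :: (map succn (iota 0 m) ++ [:: m.+1]).
  have i1 : iota 1 m = map succn (iota 0 m) by rewrite (iotaDl 1 0 m).
  by rewrite -[iota 0 m.+2]/(0%N :: iota 1 m.+1) -(addn1 m) iotaD i1 add1n addn1.
rewrite big_cons big_cat big_map big_seq1 /=.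
have b0 : bb true 0 t = a by rewrite /bb take0 drop0.
have bn : bb true m.+1 t = a by rewrite /bb take_oversize ?st // drop_oversize ?st // addn0.
rewrite b0 bn /ee /= ltnn !andFb !addn0 add0n.
have -> : 'X^((~~ odd m) != true) + 'X^((~~ odd m) != false) = 1 + 'X :> {poly R}.
  by case: (odd m); rewrite /= expr0 expr1 // addrC.
rewrite expr1 expr0.
have mid : \sum_(j <- iota 0 m) ('X^(ee true m.+1 j.+1) + 'X^(ee false m.+1 j.+1)) *
     'X^(bb true j.+1 t)
   = (1 + 'X^2) * \sum_(j <- iota 0 m) (if chi t j then 'X^(a.-1) else 'X^a) :> {poly R}.
  rewrite mulr_sumr; apply: eq_big_seq => j; rewrite mem_iota add0n leq0n /= => jm.
  have := alt_split (t := t) (j := j); rewrite st ltnS => /(_ jm); rewrite -/a => ->.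
  rewrite /ee /= ltnS jm /=.
  by case: (odd j); case: (chi t j); rewrite /= ?addn0 ?addn1 ?expr0 ?expr2 // addrC.
rewrite /ee /= in mid; rewrite mid sum_if.
have ca : count (chi t) (iota 0 m) = a by rewrite /a alt_count st.
have cb : count (predC (chi t)) (iota 0 m) = (m - a)%N.
  by have := count_predC (chi t) (iota 0 m); rewrite size_iota ca => E; rewrite -[in RHS]E addKn.
rewrite ca cb deriv_helper subnK; last by rewrite -ca -{2}(size_iota 0 m) count_size.
rewrite mulr2n; ring.
Qed.

Lemma Pn_lt n t v : t \in Pn n -> v \in t -> (v < n)%N.
Proof. by rewrite mem_Pn => /perm_mem -> ; rewrite mem_iota. Qed.

Lemma Asum_max (R : comNzRingType) n :
  Asum R n.+1 = \sum_(t <- Pn n) \sum_(i <- iota 0 n.+1)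
                  'X^(ee true n i) * 'X^(bb false i t).
Proof.
rewrite /Asum -(perm_big _ (Pn_max n)) big_allpairs_dep.
apply: eq_big_seq => t tP; apply: eq_big_seq => i; rewrite mem_iota add0n ltnS => /andP[_ iN].
rewrite -exprD /bb (alt_ins (h:=true)) ?(Pn_size tP) // ?addnA //.
by move=> v vt; rewrite (Pn_lt tP vt) ltnNge ltnW // (Pn_lt tP vt).
Qed.

Lemma Asum_min (R : comNzRingType) n :
  Asum R n.+1 = \sum_(t <- Pn n) \sum_(i <- iota 0 n.+1)
                  'X^(ee false n i) * 'X^(bb false i t).
Proof.
rewrite /Asum -(perm_big _ (Pn_min n)) big_allpairs_dep.
apply: eq_big_seq => t tP; apply: eq_big_seq => i; rewrite mem_iota add0n ltnS => /andP[_ iN].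
have ext : {in map succn t, forall v, (v < 0)%N = false /\ (0 < v)%N = ~~ false}.
  by move=> v /mapP[u _ ->]; split.
have mono : forall s : seq nat, {in s &, forall x y, (x < y)%N = (succn x < succn y)%N}.
  by move=> s x y _ _; rewrite ltnS.
rewrite -exprD /bb (alt_ins (h:=false)) ?size_map ?(Pn_size tP) //.
by rewrite -map_take -map_drop !altp_map_mono ?addnA.
Qed.

Lemma Asum_rec (R : comNzRingType) m :
  Asum R m.+2 *+ 2 = ((1 + 'X) * Asum R m.+1) *+ 2
     + (1 + 'X^2) * ((1 - 'X) * (Asum R m.+1)^`() + Asum R m.+1 *+ m).
Proof.
rewrite mulr2n {1}Asum_max Asum_min -big_split /=.
under eq_bigr do rewrite -big_split /=.
under eq_bigr do under eq_bigr do rewrite -mulrDl.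
rewrite exchange_big.
transitivity (\sum_(i <- iota 0 m.+2) \sum_(t <- Pn m.+1)
   ('X^(ee true m.+1 i) + 'X^(ee false m.+1 i)) * 'X^(bb true i t) : {poly R}).
  apply: eq_big_seq => i iP; have : i \in iota 0 m.+2 := iP.
  rewrite mem_iota add0n ltnS => /andP[_ iN].
  exact: (flip_sum (fun a b => ('X^(ee true m.+1 i) + 'X^(ee false m.+1 i)) * 'X^(a + b))).
rewrite exchange_big.
rewrite (eq_big_seq _ (fun t tP => per_sigma R tP)).
rewrite big_split /= -mulr_sumr big_split /= -mulr_sumr raddf_sum /=.
rewrite big_split /= -mulr_sumr -sumrMnl /Asum mulr2n.
by [].
Qed.

Close Scope ring_scope.
Open Scope ring_scope.

Definition hom (R : comNzRingType) (M : nat) (p : {poly R}) : {poly R} :=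
  \sum_(k < M.+1) p`_k *: ((1 + 'X) ^+ k * (1 - 'X) ^+ (M - k)).

Lemma hom_add (R : comNzRingType) M (p q : {poly R}) : hom M (p + q) = hom M p + hom M q.
Proof. by rewrite /hom -big_split /=; apply: eq_bigr => k _; rewrite coefD scalerDl. Qed.

Lemma hom_scale (R : comNzRingType) M c (p : {poly R}) : hom M (c *: p) = c *: hom M p.
Proof. by rewrite /hom scaler_sumr; apply: eq_bigr => k _; rewrite coefZ scalerA. Qed.

Lemma hom0 (R : comNzRingType) M : hom M (0 : {poly R}) = 0.
Proof. by rewrite /hom big1 // => k _; rewrite coef0 scale0r. Qed.

Lemma hom_natmul (R : comNzRingType) M (p : {poly R}) c : hom M (p *+ c) = hom M p *+ c.
Proof.
elim: c => [|c IH]; first by rewrite !mulr0n hom0.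
by rewrite !mulrS hom_add IH.
Qed.

Lemma hom_Xn (R : comNzRingType) M j : (j <= M)%N ->
  hom M ('X^j : {poly R}) = (1 + 'X) ^+ j * (1 - 'X) ^+ (M - j).
Proof.
move=> jM; rewrite /hom (bigD1 (Ordinal (_ : (j < M.+1)%N))) //= big1.
  by rewrite coefXn eqxx scale1r addr0.
by move=> k kj; rewrite coefXn (_ : (k == j :> nat) = false) ?scale0r //; apply/negbTE; apply: contra kj => /eqP kj; apply/eqP; apply: val_inj.
Qed.

Definition Phi (R : comNzRingType) (m : nat) (q : {poly R}) : {poly R} :=
  (1 + 'X^2) * (q *+ m + (1 - 'X) * q^`()).

Lemma derivU (R : comNzRingType) : (1 + 'X : {poly R})^`() = 1.
Proof. by rewrite derivD derivC derivX add0r. Qed.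

Lemma derivV (R : comNzRingType) : (1 - 'X : {poly R})^`() = -1.
Proof. by rewrite derivB derivC derivX sub0r. Qed.

Lemma hom_mono (R : comNzRingType) m k : (k <= m)%N ->
  hom m.+1 ((1 + 'X^2) * ('X^k)^`()) = Phi m (hom m ('X^k : {poly R})).
Proof.
move=> km; rewrite derivXn hom_Xn // /Phi derivM !deriv_exp derivU derivV.
case: k km => [|k] km.
  rewrite mulr0n mulr0 hom0 subn0 /=.
  case: m {km} => [|m]; rewrite /= ?mulr0n ?expr0 ?exprS; ring.
rewrite /= mulrDl mul1r hom_add mulrnAr !hom_natmul -exprD.
have [r Em] : exists r, m = (k.+1 + r)%N by exists (m - k.+1)%N; lia.
rewrite !hom_Xn; try lia.
have -> : (m.+1 - k = r.+2)%N by lia.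
have -> : (m.+1 - (2 + k) = r)%N by lia.
have -> : (m - k.+1 = r)%N by lia.
rewrite Em add2n.
case: r {Em} => [|r]; rewrite /= ?mulr0n ?mulr0 ?addr0 ?exprS ?expr0; ring.
Qed.

Lemma hom_sum (R : comNzRingType) M (I : Type) (r : seq I) (P : pred I) (F : I -> {poly R}) :
  hom M (\sum_(i <- r | P i) F i) = \sum_(i <- r | P i) hom M (F i).
Proof. exact: (big_morph _ (hom_add M) (hom0 _ M)). Qed.

Lemma Phi_add (R : comNzRingType) m (p q : {poly R}) : Phi m (p + q) = Phi m p + Phi m q.
Proof. by rewrite /Phi derivD mulrnDl; ring. Qed.

Lemma Phi0 (R : comNzRingType) m : Phi m (0 : {poly R}) = 0.
Proof. by rewrite /Phi deriv0 mul0rn mulr0 addr0 mulr0. Qed.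

Lemma Phi_scale (R : comNzRingType) m c (q : {poly R}) : Phi m (c *: q) = c *: Phi m q.
Proof.
rewrite /Phi derivZ -!mul_polyC; ring.
Qed.

Lemma Phi_sum (R : comNzRingType) m (I : Type) (r : seq I) (P : pred I) (F : I -> {poly R}) :
  Phi m (\sum_(i <- r | P i) F i) = \sum_(i <- r | P i) Phi m (F i).
Proof. exact: (big_morph _ (Phi_add m) (Phi0 _ m)). Qed.

Lemma hom_op (R : comNzRingType) m (p : {poly R}) : (size p <= m.+1)%N ->
  hom m.+1 ((1 + 'X^2) * p^`()) = Phi m (hom m p).
Proof.
move=> sz.
have Ep : p = \sum_(k < m.+1) p`_k *: 'X^k.
  rewrite -poly_def; apply/polyP => i; rewrite coef_poly; case: ltnP => // H.
  by rewrite nth_default //; exact: leq_trans sz H.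
rewrite Ep raddf_sum mulr_sumr hom_sum hom_sum Phi_sum; apply: eq_bigr => k _.
change (hom m.+1 ((1 + 'X^2) * (p`_k *: 'X^k)^`()) = Phi m (hom m (p`_k *: 'X^k))).
by rewrite derivZ -scalerAr hom_scale hom_scale Phi_scale hom_mono // -ltnS.
Qed.

Close Scope ring_scope.
Open Scope ring_scope.

Lemma size_deriv_le (R : nzRingType) (p : {poly R}) : (size p^`() <= (size p).-1)%N.
Proof.
have [->|p0] := eqVneq p 0; first by rewrite deriv0 size_poly0.
by have := lt_size_deriv p0; case: (size p).
Qed.

Lemma size_derivP (R : nzRingType) n : (size (derivP R n) <= n.+2)%N.
Proof.
elim: n => [|n IH] /=; first by rewrite size_polyX.
apply: leq_trans (size_mul_leq _ _) _.
have h1 : (size ((1 + 'X^2)%R : {poly R}) <= 3)%N.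
  by apply: leq_trans (size_polyD _ _) _; rewrite size_poly1 size_polyXn.
have h2 := size_deriv_le (derivP R n).
move: (size _) (size _) (size (derivP R n)) h1 h2 IH => a b c; lia.
Qed.

Lemma hom_eval (R : fieldType) M (p : {poly R}) (x : R) : (size p <= M.+1)%N -> x != 1 ->
  (hom M p).[x] = (1 - x) ^+ M * p.[(1 + x) / (1 - x)].
Proof.
move=> sz x1; have nz : 1 - x != 0 by rewrite subr_eq0 eq_sym.
rewrite (horner_coef_wide _ sz) mulr_sumr /hom horner_sum; apply: eq_bigr => k _.
have kM : (k <= M)%N by rewrite -ltnS.
rewrite hornerZ hornerM !horner_exp hornerD hornerC hornerX hornerD hornerN hornerC hornerX.
have -> : (1 - x) ^+ M = (1 - x) ^+ (M - k) * (1 - x) ^+ k by rewrite -exprD subnK.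
rewrite expr_div_n; field.
by rewrite expf_neq0.
Qed.

Lemma Asum1 (R : comNzRingType) : Asum R 1 = 1.
Proof. by rewrite /Asum /Pn /= big_seq1 expr0. Qed.

Lemma main_poly (R : comNzRingType) m :
  hom m.+2 (derivP R m.+1) = ((1 + 'X^2) * Asum R m.+1) *+ 2 ^ m.+1.
Proof.
elim: m => [|m IH].
  rewrite /= derivX mulr1 Asum1 mulr1 hom_add -{1}(expr0 ('X : {poly R})) !hom_Xn //=.
  rewrite !expr0; ring.
rewrite [derivP R m.+2]/= hom_op; last exact: size_derivP.
rewrite IH /Phi derivMn derivM derivD derivC derivXn add0r.
have -> : (1 + 'X^2) * Asum R m.+2 *+ 2 ^ m.+2 =
    ((1 + 'X^2) * (Asum R m.+2 *+ 2)) *+ (2 ^ m * 2) :> {poly R}.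
  by rewrite mulrnAr -mulrnA; congr (_ *+ _); rewrite !expnS; lia.
rewrite Asum_rec.
rewrite (expnS 2 m) (mulnC 2).
move: (2 ^ m)%N => N.
rewrite /= ?expr1; ring.
Qed.

Theorem mainTheorem1 (R : realFieldType) (n : nat) (x : R) :
  (1 <= n)%N -> x != 1 ->
  2 ^+ n * (1 + x ^+ 2) * (altEuler R n).[x]
  = (1 - x) ^+ n.+1 * (derivP R n).[(1 + x) / (1 - x)].
Proof.
case: n => [//|m] _ x1.
rewrite -hom_eval // ?size_derivP // main_poly altEulerE hornerMn hornerM.
rewrite hornerD hornerC horner_exp hornerX -mulrA -natrX mulr_natl.
by [].
Qed.
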